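(* Let $q$ be a root of unity with $q^4\ne1$ and let $\rho$ be a type-$0$ representation with parameters $\sigma$ (general), $w$, $(\vec s,\vec t)\in E^0_{\sigma,w}$. (1) If $\Pi_s=\Pi_t=0$ and $r_i(\sigma,w)=r_j(\sigma,w)=0$ for some $i\neq j$ in $\mathbb Z/D$, then $\rho$ is reducible. (2) If moreover $z_0=\sigma^D+\sigma^{-D}\neq\pm2$, the converse holds: $\rho$ reducible implies $\Pi_s=\Pi_t=0$ and $r_i=r_j=0$ for some $i\ne j$.
   Context: $\mathcal S_q(\Sigma_{1,1})$ is the Kauffman bracket skein algebra of the one-punctured torus, generated by the slope $0,1,\infty$ curves $\alpha_0,\alpha_1,\alpha_\infty$. For $q$ a root of unity: $n=\mathrm{ord}(q^2)$, $D=n$. For $\sigma\in\mathbb C^\times$: $z_0=\sigma^D+\sigma^{-D}$, $\lambda_i=q^{2i}\sigma+q^{-2i}\sigma^{-1}$, $\hat\lambda_i=q^{2i}\sigma-q^{-2i}\sigma^{-1}$ ($i\in\mathbb Z/D$); $\sigma$ is general if $z_0\ne\pm2$ or ($z_0=-2$ and $n$ even). $r_i(\sigma,w)=\frac{w+q^{4i+2}\sigma^2+q^{-4i-2}\sigma^{-2}}{\hat\lambda_i\hat\lambda_{i+1}}$, $E^0_{\sigma,w}=\{(\vec s,\vec t)\in\mathbb C^{2D}:s_it_i=r_i(\sigma,w)\}$, $\Pi_s=\prod_i s_i$, $\Pi_t=\prod_it_i$. The type-$0$ representation: $V$ with basis $\{v_i\}_{i\in\mathbb Z/D}$, $\rho(\alpha_0)v_i=\lambda_iv_i$,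 $\rho(\alpha_1)v_i=q^{2i+1}\sigma s_iv_{i+1}+q^{-2i+1}\sigma^{-1}t_{i-1}v_{i-1}$, $\rho(\alpha_\infty)v_i=s_iv_{i+1}+t_{i-1}v_{i-1}$; this is a representation of $\mathcal S_q(\Sigma_{1,1})$. *)

(* Defs.v *)
From HB Require Import structures.
From mathcomp Require Import all_boot all_order all_algebra.
Set Implicit Arguments. Unset Strict Implicit. Unset Printing Implicit Defensive.
Import Order.TTheory GRing.Theory Num.Theory.
From mathcomp Require Import complex Rstruct.
Local Open Scope ring_scope.

Definition C : numClosedFieldType := complex Rdefinitions.R.

Section TypeZero.
Variables (q sigma w : C) (D : nat).
Variables (s t : 'I_D -> C).

Definition lam (i : 'I_D) : C := q ^+ (2 * i) * sigma + q ^- (2 * i) * sigma^-1.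
Definition lamhat (i : 'I_D) : C := q ^+ (2 * i) * sigma - q ^- (2 * i) * sigma^-1.

Definition z0 : C := sigma ^+ D + sigma ^- D.

(* sigma general (n = D = ord(q^2)) *)
Definition general_sigma : Prop :=
  (z0 != 2 /\ z0 != -2) \/ (z0 = -2 /\ ~~ odd D).

Definition r (i : 'I_D) : C :=
  (w + q ^+ (4 * i + 2) * sigma ^+ 2 + q ^- (4 * i + 2) * sigma ^- 2)
  / (lamhat i * lamhat (ordS i)).

Definition in_E0 : Prop := forall i : 'I_D, s i * t i = r i.

(* Matrices of rho(alpha_0), rho(alpha_1), rho(alpha_infty) in the basis
   (v_i)_{i in Z/D}, acting on ROW vectors: entry (i,j) is the coefficient
   of v_j in rho(alpha) v_i. *)
Definition rho_alpha0 : 'M[C]_D :=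
  \matrix_(i, j) (if j == i then lam i else 0).

Definition rho_alpha1 : 'M[C]_D :=
  \matrix_(i, j) ((if j == ordS i then q ^+ (2 * i + 1) * sigma * s i else 0)
                + (if j == ord_pred i then q ^- (2 * i) * q * sigma^-1 * t (ord_pred i)
                   else 0)).

Definition rho_alphainf : 'M[C]_D :=
  \matrix_(i, j) ((if j == ordS i then s i else 0)
                + (if j == ord_pred i then t (ord_pred i) else 0)).

(* The representation is reducible: there is a nonzero proper subspace of
   V = C^D invariant under the images of the generators alpha_0, alpha_1,
   alpha_infty (equivalently, under the whole image of the skein algebra). *)
Definition reducible : Prop :=
  exists U : 'M[C]_D,
    [/\ (0 < \rank U)%N, (\rank U < D)%N,
        stablemx U rho_alpha0, stablemx U rho_alpha1 & stablemx U rho_alphainf].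

End TypeZero.

(* Main.v *)
Require Import Defs.
From HB Require Import structures.
From mathcomp Require Import all_boot all_order all_algebra.
Import Order.TTheory GRing.Theory Num.Theory.
From mathcomp Require Import complex Rstruct.
From mathcomp Require Import zify ring.
Set Implicit Arguments. Unset Strict Implicit.
Local Open Scope ring_scope.

Lemma predmodE n i : (i < n)%N -> ((i + n).-1 %% n)%N = if i == 0%N then n.-1 else i.-1.
Proof.
case: i => [|i] lt /=. rewrite modn_small; lia.
rewrite ?addSn /= modnDr modn_small; lia.
Qed.
Lemma succmodE n i : (i < n)%N -> (i.+1 %% n)%N = if i.+1 == n then 0%N else i.+1.
Proof. move=> lt; case: eqP => [->|h]; first by rewrite modnn. rewrite modn_small; lia. Qed.
Lemma distE n a z : (a < n)%N -> (z < n)%N -> ((z + n - a) %% n)%N = if (a <= z)%N then (z - a)%N else (z + n - a)%N.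
Proof.
move=> ha hz; case: leqP => h.
  rewrite -addnBAC // modnDr modn_small; lia.
rewrite modn_small; lia.
Qed.

Lemma val_ordS n (i : 'I_n) : val (ordS i) = if i.+1 == n then 0%N else i.+1.
Proof. by rewrite /= succmodE. Qed.
Lemma val_ord_pred n (i : 'I_n) : val (ord_pred i) = if val i == 0%N then n.-1 else i.-1.
Proof. by rewrite /= predmodE. Qed.

Lemma ordS_pred n (i : 'I_n) : ord_pred (ordS i) = i.
Proof. apply: val_inj; rewrite val_ord_pred !val_ordS; have := ltn_ord i. case: eqP; case: eqP => /=; lia. Qed.

Lemma ordS_neq_pred n (i : 'I_n) : (3 <= n)%N -> ordS i != ord_pred i.
Proof. move=> h; apply/eqP => /(congr1 val); rewrite val_ord_pred !val_ordS; have := ltn_ord i; case: eqP; case: eqP => /=; lia. Qed.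

Lemma ordS_neq_ordSS n (i : 'I_n) : (3 <= n)%N -> i != ordS (ordS i).
Proof. move=> h; apply/eqP => /(congr1 val); rewrite !val_ordS; have := ltn_ord i; repeat case: eqP => /=; lia. Qed.


Definition dd n (a z : 'I_n) : nat := ((z + n - a) %% n)%N.

Lemma dd_lt n (a z : 'I_n) : (dd a z < n)%N.
Proof. rewrite /dd ltn_mod; have := ltn_ord a; lia. Qed.

Lemma dd_inj n (a z w : 'I_n) : dd a z = dd a w -> z = w.
Proof.
rewrite /dd !distE //= => h; apply: val_inj => /=.
have := ltn_ord a; have := ltn_ord z; have := ltn_ord w.
move: h; case: (leqP a z); case: (leqP a w); lia.
Qed.

Lemma dd_succ n (a z : 'I_n) : dd a (ordS z) = if dd a z == n.-1 then 0%N else (dd a z).+1.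
Proof.
rewrite /dd !distE //= succmodE //.
have := ltn_ord a; have := ltn_ord z.
  by case: (eqVneq z.+1 n) => h1 /=; case: (leqP a z) => h2; repeat case: ifP => ?; lia.
by have := ltn_ord z; case: ifP => ?; lia.
Qed.

Lemma dd_pred n (a z : 'I_n) : dd a (ord_pred z) = if dd a z == 0%N then n.-1 else (dd a z).-1.
Proof.
rewrite /dd !distE //= predmodE //.
have := ltn_ord a; have := ltn_ord z.
  by case: (eqVneq (nat_of_ord z) 0%N) => h1 /=; case: (leqP a z) => h2; repeat case: ifP => ?; lia.
by have := ltn_ord z; case: ifP => ?; lia.
Qed.

Lemma dd_self n (a : 'I_n) : dd a a = 0%N.
Proof. by rewrite /dd -addnBAC // subnn add0n modnn. Qed.

Lemma dd_last n (l : 'I_n) : dd (ordS l) l = n.-1.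
Proof.
rewrite /dd distE //= succmodE //; have := ltn_ord l.
  by case: (eqVneq l.+1 n) => h1 /=; repeat case: ifP => ?; lia.
by have := ltn_ord l; case: ifP => ?; lia.
Qed.

Definition arc n (l k : 'I_n) : pred 'I_n := fun z => (dd (ordS l) z <= dd (ordS l) k)%N.

Lemma arc1 n (l k i : 'I_n) : arc l k i -> ~~ arc l k (ordS i) -> i = k.
Proof.
rewrite /arc dd_succ => h1 h2; apply: (@dd_inj _ (ordS l)).
have := dd_lt (ordS l) k; move: h1 h2; case: eqP => ?; lia.
Qed.

Lemma arc2 n (l k i : 'I_n) : arc l k i -> ~~ arc l k (ord_pred i) -> ord_pred i = l.
Proof.
rewrite /arc dd_pred => h1 h2; apply: (@dd_inj _ (ordS l)).
rewrite dd_pred dd_last; move: h1 h2; case: eqP => ?; lia.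
Qed.

Lemma arc_in n (l k : 'I_n) : arc l k (ordS l).
Proof. by rewrite /arc dd_self. Qed.

Lemma arc_out n (l k : 'I_n) : k != l -> ~~ arc l k l.
Proof.
move=> kl; rewrite /arc dd_last -ltnNge.
have := dd_lt (ordS l) k; have : dd (ordS l) k != n.-1.
  by apply: contra kl => /eqP e; apply/eqP/(@dd_inj _ (ordS l)); rewrite e dd_last.
lia.
Qed.

Definition cproj n (S : pred 'I_n) : 'M[C]_n := diag_mx (\row_i (if S i then 1 else 0)).

Lemma cproj_stable n (S : pred 'I_n) (M : 'M[C]_n) :
  (forall i j, S i -> ~~ S j -> M i j = 0) -> stablemx (cproj S) M.
Proof.
move=> hM; apply/submxP; exists (cproj S *m M).
apply/matrixP => i j; rewrite /cproj mul_mx_diag mul_diag_mx !mxE.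
case Sj: (S j); first by rewrite mulr1.
case Si: (S i); last by rewrite !mul0r.
by rewrite hM ?Si ?Sj // !mulr0.
Qed.

Lemma cproj_rank n (S : pred 'I_n) x y : S x -> ~~ S y ->
  (0 < \rank (cproj S))%N /\ (\rank (cproj S) < n)%N.
Proof.
move=> Sx Sy; split.
  rewrite lt0n mxrank_eq0; apply/eqP => /matrixP /(_ x x).
  by rewrite /cproj !mxE eqxx Sx /= mulr1n; apply/eqP; exact: oner_neq0.
rewrite ltn_neqAle rank_leq_row andbT; apply/negP => /eqP full.
have U : cproj S \in unitmx by rewrite -row_free_unit /row_free full.
have PP : cproj S *m cproj S = cproj S.
  apply/matrixP => i j; rewrite /cproj mul_mx_diag !mxE.
  by case: (eqVneq i j) => [->|_]; case: (S j); rewrite /= ?mulr1 ?mulr0 ?mulr0n.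
have P1 : cproj S = 1%:M.
  have e1 := mulmxK U (cproj S); have e2 := mulmxK U 1%:M.
  by rewrite PP in e1; rewrite mul1mx in e2; rewrite -e1 e2.
move/matrixP: P1 => /(_ y y); rewrite /cproj !mxE eqxx (negbTE Sy) /=.
by move/eqP; rewrite eq_sym oner_eq0.
Qed.

Lemma tri_zero n (S : pred 'I_n) (f g : 'I_n -> C) i j : S i -> ~~ S j ->
  (~~ S (ordS i) -> f i = 0) -> (~~ S (ord_pred i) -> g i = 0) ->
  (if j == ordS i then f i else 0) + (if j == ord_pred i then g i else 0) = 0.
Proof.
move=> Si Sj hf hg.
have A : (if j == ordS i then f i else 0) = 0.
  by case: eqP => [e|_] //; apply: hf; rewrite -e.
have B : (if j == ord_pred i then g i else 0) = 0.
  by case: eqP => [e|_] //; apply: hg; rewrite -e.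
by rewrite A B addr0.
Qed.

Lemma pick_kl n (s t : 'I_n -> C) (rr : 'I_n -> C) :
  (forall i, s i * t i = rr i) ->
  \prod_(i < n) s i = 0 -> \prod_(i < n) t i = 0 ->
  (exists i j : 'I_n, [/\ i != j, rr i = 0 & rr j = 0]) ->
  exists k l : 'I_n, [/\ s k = 0, t l = 0 & k != l].
Proof.
move=> hE /eqP/prodf_eq0 [k _ /eqP sk] /eqP/prodf_eq0 [l _ /eqP tl] [i [j [ij ri rj]]].
case: (eqVneq k l) => [e|kl]; last by exists k, l.
subst l.
have [i' [i'k ri']] : exists i', i' != k /\ rr i' = 0.
  case: (eqVneq i k) => [e|ik]; last by exists i.
  by exists j; split => //; rewrite -e eq_sym.
move: ri'; rewrite -hE => /eqP; rewrite mulf_eq0 => /orP [/eqP si|/eqP ti].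
  by exists i', k.
by exists k, i'; rewrite eq_sym.
Qed.

Lemma part1 (q : C) (n : nat) (sigma w : C) (s t : 'I_n -> C) :
  (3 <= n)%N -> in_E0 q sigma w s t ->
  \prod_(i < n) s i = 0 -> \prod_(i < n) t i = 0 ->
  (exists i j : 'I_n, [/\ i != j, r q sigma w i = 0 & r q sigma w j = 0]) ->
  reducible q sigma s t.
Proof.
move=> n3 hE ps pt hij.
have [k [l [sk tl kl]]] := pick_kl hE ps pt hij.
have [r0 r1] := cproj_rank (arc_in l k) (arc_out kl).
exists (cproj (arc l k)); split => //; apply: cproj_stable => i j Si Sj; rewrite mxE.
- by case: eqP => // e; move: Sj; rewrite e Si.
- apply: (@tri_zero _ _ (fun i => q ^+ (2 * i + 1) * sigma * s i)
     (fun i => q ^- (2 * i) * q * sigma^-1 * t (ord_pred i)) i j Si Sj) => h.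
    by rewrite (arc1 Si h) sk mulr0.
  by rewrite (arc2 Si h) tl mulr0.
- apply: (@tri_zero _ _ s (fun i => t (ord_pred i)) i j Si Sj) => h.
    by rewrite (arc1 Si h) sk.
  by rewrite (arc2 Si h) tl.
Qed.

Lemma alpha0_mul (q sigma : C) n (v : 'rV[C]_n) m :
  (v *m rho_alpha0 q sigma n) 0 m = v 0 m * lam q sigma m.
Proof.
rewrite !mxE (bigD1 m) //= big1 ?addr0; first by rewrite mxE eqxx.
by move=> k km; rewrite mxE eq_sym (negbTE km) mulr0.
Qed.

Lemma coord_sub (q sigma : C) n (U : 'M[C]_n) :
  injective (lam q sigma (D:=n)) -> stablemx U (rho_alpha0 q sigma n) ->
  forall (u : 'rV[C]_n) j, (u <= U)%MS -> u 0 j != 0 -> ((delta_mx 0 j : 'rV[C]_n) <= U)%MS.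
Proof.
move=> linj hst u j uU uj.
have claim : forall sq : seq 'I_n, j \notin sq -> exists v : 'rV[C]_n,
    [/\ (v <= U)%MS, v 0 j != 0 & forall k, k \in sq -> v 0 k = 0].
  elim=> [|k sq IH]; first by exists u; split.
  rewrite in_cons negb_or => /andP [jk jsq].
  have [v [vU vj vs]] := IH jsq.
  set v' := v *m rho_alpha0 q sigma n + (- lam q sigma k) *: v.
  have hv : forall m, v' 0 m = v 0 m * (lam q sigma m - lam q sigma k).
    by move=> m; rewrite /v' mxE alpha0_mul mxE; ring.
  exists v'; split.
  - apply: addmx_sub; last exact: scalemx_sub.
    exact: submx_trans (submxMr _ vU) hst.
  - rewrite hv mulf_neq0 // subr_eq0; apply: contra jk => /eqP e; apply/eqP; exact: linj.
  - move=> k'; rewrite in_cons => /orP [/eqP ->|/vs v0].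
      by rewrite hv subrr mulr0.
    by rewrite hv v0 mul0r.
have nj : j \notin enum [pred k | k != j] by rewrite mem_enum !inE eqxx.
have [v [vU vj vs]] := claim _ nj.
have -> : delta_mx 0 j = (v 0 j)^-1 *: v.
  apply/rowP => m; rewrite !mxE.
  case: (eqVneq m j) => [->|mj]; first by rewrite eqxx mulVf.
  by rewrite andbF (vs m) ?mem_enum ?inE // mulr0.
exact: scalemx_sub.
Qed.

Lemma val_iter n (x : 'I_n) k : val (iter k (@ordS n) x) = ((x + k) %% n)%N.
Proof.
elim: k => [|k IH] /=; first by rewrite addn0 modn_small.
by rewrite IH -addn1 modnDml addn1 addnS.
Qed.

Lemma bnd n (P : pred 'I_n) x y : P x -> ~~ P y -> exists2 z, P z & ~~ P (ordS z).
Proof.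
move=> Px Py.
case: (pickP (fun z => P z && ~~ P (ordS z))) => [z /andP[]|h]; first by exists z.
have all : forall k, P (iter k (@ordS n) x).
  by elim => //= k IH; have := h (iter k (@ordS n) x); rewrite IH /= => /negbFE.
have e : iter (y + n - x) (@ordS n) x = y.
  apply: val_inj; rewrite val_iter subnKC; last by have := ltn_ord x; lia.
  by rewrite modnDr modn_small.
by move: Py; rewrite -e all.
Qed.

Lemma part2 (q : C) (n : nat) (sigma w : C) (s t : 'I_n -> C) :
  (3 <= n)%N -> injective (lam q sigma (D:=n)) -> in_E0 q sigma w s t ->
  reducible q sigma s t ->
  \prod_(i < n) s i = 0 /\ \prod_(i < n) t i = 0 /\
  exists i j : 'I_n, [/\ i != j, r q sigma w i = 0 & r q sigma w j = 0].
Proof.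
move=> n3 linj hE [U [r0 r1 st0 st1 stinf]].
pose P := fun k : 'I_n => ((delta_mx 0 k : 'rV[C]_n) <= U)%MS.
have [x Px] : exists x, P x.
  have : U != 0 by rewrite -mxrank_eq0 -lt0n.
  case: (pickP (fun ij : 'I_n * 'I_n => U ij.1 ij.2 != 0)) => [[i j] /= h|h] Unz.
    by exists j; apply: (coord_sub linj st0 (row_sub i U)); rewrite mxE.
  by case/eqP: Unz; apply/matrixP => i j; have := h (i,j); rewrite /= mxE => /negbFE/eqP.
have [y Py] : exists y, ~~ P y.
  case: (pickP (fun k => ~~ P k)) => [y hy|h]; first by exists y.
  have : (1%:M <= U)%MS.
    by apply/row_subP => k; rewrite rowE mulmx1; have := h k; move/negbFE.
  by move/mxrankS; rewrite mxrank1; lia.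
have [b Pb Pb'] := bnd Px Py.
have Px2 : ~~ (predC P) x by rewrite inE negbK.
have [c Pc' Pc] := bnd (P := predC P) Py Px2.
rewrite /= negbK in Pc.
have rs : forall z, P z -> (row z (rho_alphainf s t) <= U)%MS.
  by move=> z Pz; rewrite rowE; exact: submx_trans (submxMr _ Pz) stinf.
have sb : s b = 0.
  apply/eqP; apply: contraNT Pb' => sb.
  apply: (coord_sub linj st0 (rs _ Pb)).
  by rewrite !mxE eqxx (negbTE (ordS_neq_pred b n3)) addr0.
have tc : t c = 0.
  apply/eqP; apply: contraNT Pc' => tc.
  apply: (coord_sub linj st0 (rs _ Pc)).
  by rewrite !mxE ordS_pred eqxx (negbTE (ordS_neq_ordSS c n3)) add0r.
split; first by apply/eqP/prodf_eq0; exists b => //; apply/eqP.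
split; first by apply/eqP/prodf_eq0; exists c => //; apply/eqP.
exists b, c; split.
- by apply: contraNneq Pc' => <-.
- by rewrite -hE sb mul0r.
- by rewrite -hE tc mulr0.
Qed.

Lemma n_ge3 (q : C) n : n.-primitive_root (q ^+ 2) -> q ^+ 4 != 1 -> (3 <= n)%N.
Proof.
move=> pr q4; have n0 := prim_order_gt0 pr.
have := prim_expr_order pr.
case: n pr n0 => [|[|[|n]]] //= pr _ h.
- by move: q4; rewrite expr1 in h; rewrite (_ : 4 = 2 * 2)%N // exprM h expr1n eqxx.
- by move: q4; rewrite (_ : 4 = 2 * 2)%N // exprM h eqxx.
Qed.

Lemma lam_inj (q sigma : C) n : n.-primitive_root (q ^+ 2) -> sigma != 0 ->
  z0 sigma n != 2 -> z0 sigma n != -2 -> injective (lam q sigma (D:=n)).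
Proof.
move=> pr s0 z2 zm2 i k e.
have qn := prim_expr_order pr.
have q0 : q != 0.
  apply/eqP => q0; move: qn; rewrite q0 expr0n /= expr0n.
  by have := prim_order_gt0 pr; case: n {pr z2 zm2 i k e} => // n _ /eqP; rewrite eq_sym oner_eq0.
have x0 : q ^+ (2 * i) != 0 by rewrite expf_neq0.
have y0 : q ^+ (2 * k) != 0 by rewrite expf_neq0.
have key : (q ^+ (2 * i) - q ^+ (2 * k)) * (q ^+ (2 * i) * q ^+ (2 * k) * sigma ^+ 2 - 1) = 0.
  have h : q ^+ (2 * i) * q ^+ (2 * k) * sigma * (lam q sigma i - lam q sigma k) =
     (q ^+ (2 * i) - q ^+ (2 * k)) * (q ^+ (2 * i) * q ^+ (2 * k) * sigma ^+ 2 - 1).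
    by rewrite /lam; field; rewrite x0 y0 s0.
  by rewrite -h e subrr mulr0.
move/eqP: key; rewrite mulf_eq0 => /orP [|].
  rewrite subr_eq0 !exprM (eq_prim_root_expr pr) !modn_small // => /eqP ik.
  exact: val_inj.
rewrite subr_eq0 => /eqP h1.
have : (sigma ^+ n) ^+ 2 = 1.
  have := congr1 (fun z => z ^+ n) h1; rewrite /= expr1n !exprMn -!exprM.
  rewrite [(2 * i * n)%N]mulnC [(2 * k * n)%N]mulnC !mulnA [(n * 2)%N]mulnC.
  by rewrite !exprM qn !expr1n !mul1r -exprM mulnC exprM.
move/eqP; rewrite sqrf_eq1 => /orP [] /eqP hs.
  by move: z2; rewrite /z0 hs invr1 => /eqP; case.
by move: zm2; rewrite /z0 hs invrN1 => /eqP; case; rewrite -opprD.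
Qed.

Theorem mainTheorem9 (q : C) (n : nat) (sigma w : C) (s t : 'I_n -> C) :
  n.-primitive_root (q ^+ 2) ->
  q ^+ 4 != 1 ->
  sigma != 0 ->
  general_sigma sigma n ->
  in_E0 q sigma w s t ->
  ((\prod_(i < n) s i = 0 /\ \prod_(i < n) t i = 0 /\
    exists i j : 'I_n, [/\ i != j, r q sigma w i = 0 & r q sigma w j = 0]) ->
     reducible q sigma s t)
  /\
  (z0 sigma n != 2 -> z0 sigma n != -2 ->
   reducible q sigma s t ->
   \prod_(i < n) s i = 0 /\ \prod_(i < n) t i = 0 /\
   exists i j : 'I_n, [/\ i != j, r q sigma w i = 0 & r q sigma w j = 0]).
Proof.
move=> pr q4 s0 _ hE; have n3 := n_ge3 pr q4; split.
  by move=> [ps [pt hij]]; exact: part1 n3 hE ps pt hij.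
by move=> z2 zm2; apply: part2 n3 (lam_inj pr s0 z2 zm2) hE.
Qed.
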